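(* Let $(\alpha_0,\beta_0)\in U$ with $K(\alpha_0,\beta_0)\in\mathfrak M_\infty$, and let $(\alpha_n,\beta_n)\in U$ with $(\alpha_n,\beta_n)\to(\alpha_0,\beta_0)$, $\mathcal P_n=\{[0,\alpha_n],[\alpha_n,1]\}$ for $n=0,1,\dots$. Then for every $m\ge1$ there is $\delta_m>0$ such that for every $n$ every interval of $\mathcal P_n^{(m)}=\bigvee_{j=0}^{m-1}T^{-j}_{\alpha_n,\beta_n}(\mathcal P_n)$ has Lebesgue measure at least $\delta_m$.
   Context: For $0<\alpha<1$ and $0\le\beta\le1$ the skew tent map is $T_{\alpha,\beta}(x)=\frac{\beta}{\alpha}x$ for $0\le x\le\alpha$ and $T_{\alpha,\beta}(x)=\frac{\beta}{1-\alpha}(1-x)$ for $\alpha<x\le1$. $U=\{(\alpha,\beta): \tfrac12<\beta\le1,\ 1-\beta<\alpha<\beta\}$. The kneading sequence $K(\alpha,\beta)$ is built from the symbols $\mathfrak m_n=L,C,R$ according as $T^n_{\alpha,\beta}(\alpha)<\alpha$, $=\alpha$, $>\alpha$, truncated at the first $C$ if there is one; $\mathfrak M_\infty$ is the set of kneading sequences containing no $C$, i.e. those with $T^k_{\alpha,\beta}(\alpha)\ne\alpha$ for all $k\ge1$. The partition $\mathcal P_n^{(m)}$ consists of the nondegenerate closed intervals into which $[0,1]$ is cut by the points $0,1$ and all points of $T^{-j}_{\alpha_n,\beta_n}(\alpha_n)$, $0\le j\le m-1$. *)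

(* Defs.v *)
From Stdlib Require Import Reals Lra.
Open Scope R_scope.

Definition skew_tent (a b x : R) : R :=
  if Rle_dec x a then (b / a) * x else (b / (1 - a)) * (1 - x).

Fixpoint Titer (a b : R) (n : nat) (x : R) : R :=
  match n with
  | O => x
  | S k => skew_tent a b (Titer a b k x)
  end.

Definition inU (a b : R) : Prop :=
  1/2 < b <= 1 /\ 1 - b < a < b.

(* K(a,b) belongs to M_infinity: the kneading sequence contains no C,
   i.e. T^k(a) <> a for all k >= 1. *)
Definition kneading_in_Minf (a b : R) : Prop :=
  forall k : nat, (1 <= k)%nat -> Titer a b k a <> a.

(* Cut points of the partition P^(m) for parameters (a,b):
   0, 1 and all points of T^{-j}(a) in [0,1], 0 <= j <= m-1. *)
Definition cut_point (a b : R) (m : nat) (x : R) : Prop :=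
  x = 0 \/ x = 1 \/
  (0 <= x <= 1 /\ exists j : nat, (j < m)%nat /\ Titer a b j x = a).

Definition partition_interval (a b : R) (m : nat) (x y : R) : Prop :=
  x < y /\ cut_point a b m x /\ cut_point a b m y /\
  (forall z, x < z < y -> ~ cut_point a b m z).

(* Main.v *)
Require Import Defs.
From Stdlib Require Import Reals Lra Lia Arith.
Open Scope R_scope.

Lemma inU_facts a b : inU a b -> 0 < a < 1 /\ 0 < b <= 1 /\ a < b.
Proof. unfold inU; lra. Qed.

Definition Kl (a : R) := 1/a + 1/(1-a).

Lemma Rmin_lip A B C D : Rabs (Rmin A B - Rmin C D) <= Rmax (Rabs (A - C)) (Rabs (B - D)).
Proof.
  pose proof (Rmax_l (Rabs (A - C)) (Rabs (B - D))).
  pose proof (Rmax_r (Rabs (A - C)) (Rabs (B - D))).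
  revert H H0. generalize (Rmax (Rabs (A - C)) (Rabs (B - D))). intros M H1 H2.
  unfold Rmin; repeat destruct Rle_dec; unfold Rabs in *; repeat destruct Rcase_abs; lra.
Qed.

Lemma tent_min a b x : 0 < a < 1 -> 0 <= b ->
  skew_tent a b x = Rmin (b/a*x) (b/(1-a)*(1-x)).
Proof.
  intros Ha Hb. unfold skew_tent.
  assert (Hp : b/a*a = b) by (field; lra).
  assert (Hq : b/(1-a)*(1-a) = b) by (field; lra).
  assert (0 <= b/a) by (unfold Rdiv; apply Rmult_le_pos; [lra| left; apply Rinv_0_lt_compat; lra]).
  assert (0 <= b/(1-a)) by (unfold Rdiv; apply Rmult_le_pos; [lra| left; apply Rinv_0_lt_compat; lra]).
  destruct Rle_dec.
  - rewrite Rmin_left; [reflexivity| nra].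
  - rewrite Rmin_right; [reflexivity| nra].
Qed.

Lemma tent_lip a b u v : 0 < a < 1 -> 0 <= b <= 1 ->
  Rabs (skew_tent a b u - skew_tent a b v) <= Kl a * Rabs (u - v).
Proof.
  intros Ha Hb. rewrite !tent_min by lra.
  eapply Rle_trans; [apply Rmin_lip|].
  assert (E1 : b/a*u - b/a*v = b/a*(u-v)) by ring.
  assert (E2 : b/(1-a)*(1-u) - b/(1-a)*(1-v) = b/(1-a)*(v-u)) by ring.
  rewrite E1, E2, !Rabs_mult, (Rabs_minus_sym v u).
  assert (0 <= b/a <= 1/a).
  { split; unfold Rdiv; [apply Rmult_le_pos|apply Rmult_le_compat_r]; try lra; left; apply Rinv_0_lt_compat; lra. }
  assert (0 <= b/(1-a) <= 1/(1-a)).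
  { split; unfold Rdiv; [apply Rmult_le_pos|apply Rmult_le_compat_r]; try lra; left; apply Rinv_0_lt_compat; lra. }
  rewrite (Rabs_right (b/a)) by lra. rewrite (Rabs_right (b/(1-a))) by lra.
  pose proof (Rabs_pos (u-v)). unfold Kl.
  apply Rmax_lub; nra.
Qed.

Lemma Kl_ge1 a : 0 < a < 1 -> 1 <= Kl a.
Proof.
  intros. unfold Kl. assert (1 <= 1/a).
  { apply (Rmult_le_reg_r a); [lra|]. unfold Rdiv. rewrite Rmult_assoc, Rinv_l; lra. }
  assert (0 <= 1/(1-a)) by (unfold Rdiv; rewrite Rmult_1_l; left; apply Rinv_0_lt_compat; lra).
  lra.
Qed.

Lemma iter_lip a b j u v : 0 < a < 1 -> 0 <= b <= 1 ->
  Rabs (Titer a b j u - Titer a b j v) <= Kl a ^ j * Rabs (u - v).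
Proof.
  intros Ha Hb. induction j; simpl.
  - lra.
  - eapply Rle_trans; [apply tent_lip; lra|].
    pose proof (Kl_ge1 a Ha). rewrite Rmult_assoc. apply Rmult_le_compat_l; lra.
Qed.

Lemma iter_cont a b j : 0 < a < 1 -> 0 <= b <= 1 -> continuity (Titer a b j).
Proof.
  intros Ha Hb x eps Heps.
  assert (HK : 0 < Kl a ^ j) by (apply pow_lt; pose proof (Kl_ge1 a Ha); lra).
  exists (eps / Kl a ^ j). split.
  - apply Rdiv_lt_0_compat; lra.
  - intros y [_ Hy]. simpl in *. unfold R_dist in *.
    eapply Rle_lt_trans; [apply iter_lip; lra|].
    apply (Rmult_lt_compat_l (Kl a ^ j)) in Hy; [|lra].
    replace (Kl a ^ j * (eps / Kl a ^ j)) with eps in Hy by (field; lra). lra.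
Qed.

Lemma tent0 a b : 0 < a < 1 -> skew_tent a b 0 = 0.
Proof. intros. unfold skew_tent. destruct Rle_dec; [ring| lra]. Qed.

Lemma tent1 a b : 0 < a < 1 -> skew_tent a b 1 = 0.
Proof. intros. unfold skew_tent. destruct Rle_dec; [lra| ring]. Qed.

Lemma iter0 a b j : 0 < a < 1 -> Titer a b j 0 = 0.
Proof. intros. induction j; simpl; [reflexivity|]. rewrite IHj. apply tent0; auto. Qed.

Lemma iter1 a b j : 0 < a < 1 -> Titer a b (S j) 1 = 0.
Proof. intros. induction j; simpl in *; [apply tent1; auto|]. rewrite IHj. apply tent0; auto. Qed.

Lemma tent_range a b x : 0 < a < 1 -> 0 <= b <= 1 -> 0 <= x <= 1 -> 0 <= skew_tent a b x <= 1.
Proof.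
  intros Ha Hb Hx. rewrite tent_min by lra.
  assert (Hp : b/a*a = b) by (field; lra).
  assert (0 <= b/a) by (unfold Rdiv; apply Rmult_le_pos; [lra| left; apply Rinv_0_lt_compat; lra]).
  assert (0 <= b/(1-a)) by (unfold Rdiv; apply Rmult_le_pos; [lra| left; apply Rinv_0_lt_compat; lra]).
  unfold Rmin; destruct Rle_dec; split; try nra.
  - assert (Hq : b/(1-a)*(1-a) = b) by (field; lra).
    destruct (Rle_dec x a); nra.
  - assert (Hq : b/(1-a)*(1-a) = b) by (field; lra).
    destruct (Rle_dec x a); nra.
Qed.

Lemma iter_range a b j x : 0 < a < 1 -> 0 <= b <= 1 -> 0 <= x <= 1 -> 0 <= Titer a b j x <= 1.
Proof. intros. induction j; simpl; [lra| apply tent_range; auto]. Qed.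

Lemma tent_inj_side a b u v : 0 < a < 1 -> 0 < b ->
  skew_tent a b u = skew_tent a b v -> u <> v -> (u < a < v \/ v < a < u).
Proof.
  intros Ha Hb E N. unfold skew_tent in E.
  assert (Hp : b/a*a = b) by (field; lra).
  assert (Hq : b/(1-a)*(1-a) = b) by (field; lra).
  assert (0 < b/a) by (unfold Rdiv; apply Rmult_lt_0_compat; [lra| apply Rinv_0_lt_compat; lra]).
  assert (0 < b/(1-a)) by (unfold Rdiv; apply Rmult_lt_0_compat; [lra| apply Rinv_0_lt_compat; lra]).
  destruct (Rle_dec u a), (Rle_dec v a).
  - exfalso. apply N. apply (Rmult_eq_reg_l (b/a)); lra.
  - left. split; [|lra]. destruct (Req_dec u a); [|lra]. subst. nra.
  - right. split; [|lra]. destruct (Req_dec v a); [|lra]. subst. nra.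
  - exfalso. apply N. assert (b/(1-a)*(u - v) = 0) by lra.
    apply Rmult_integral in H1. lra.
Qed.

Lemma iter_S a b j x : Titer a b (S j) x = skew_tent a b (Titer a b j x).
Proof. reflexivity. Qed.

Lemma eq_iter_interior a b j x y : inU a b -> x < y -> Titer a b j x = Titer a b j y ->
  exists l z, (l < j)%nat /\ x < z < y /\ Titer a b l z = a.
Proof.
  intros HU Hxy. destruct (inU_facts a b HU) as [Ha [Hb _]].
  induction j as [|j IH]; simpl; intros E.
  - lra.
  - destruct (Req_dec (Titer a b j x) (Titer a b j y)) as [E'|N].
    + destruct (IH E') as [l [z [Hl Hz]]]. exists l, z. split; [lia| exact Hz].
    + pose proof (tent_inj_side a b _ _ Ha (proj1 Hb) E N) as Hs.
      destruct (IVT_cor (fun t => Titer a b j t - a) x y) as [z [Hz Ez]].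
      * apply continuity_minus; [apply iter_cont; lra| apply continuity_const; intros ? ?; reflexivity].
      * lra.
      * destruct Hs; nra.
      * exists j, z. split; [lia|]. split; [|lra].
        destruct (Req_dec z x); [subst; lra|]. destruct (Req_dec z y); [subst; lra|]. lra.
Qed.

Lemma iter_add a b k i x : Titer a b (k + i) x = Titer a b k (Titer a b i x).
Proof. induction k; simpl; [reflexivity| now rewrite IHk]. Qed.

Lemma cut_range a b m x : cut_point a b m x -> 0 <= x <= 1.
Proof. unfold cut_point. intros [H|[H|[H _]]]; lra. Qed.

Lemma part_noeq a b m x y j : inU a b -> partition_interval a b m x y -> (j < m)%nat ->
  Titer a b j x <> Titer a b j y.
Proof.
  intros HU [Hxy [Cx [Cy Hno]]] Hj E.
  destruct (eq_iter_interior a b j x y HU Hxy E) as [l [z [Hl [Hz Ez]]]].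
  apply (Hno z Hz). right; right. pose proof (cut_range _ _ _ _ Cx). pose proof (cut_range _ _ _ _ Cy).
  split; [lra|]. exists l. split; [lia| exact Ez].
Qed.

Lemma lip_m a b m j x y : inU a b -> (j <= m)%nat -> x <= y ->
  Rabs (Titer a b j x - Titer a b j y) <= Kl a ^ m * (y - x).
Proof.
  intros HU Hj Hxy. destruct (inU_facts a b HU) as [Ha [Hb _]].
  eapply Rle_trans; [apply iter_lip; lra|].
  rewrite Rabs_minus_sym, Rabs_right by lra.
  apply Rmult_le_compat_r; [lra|]. apply Rle_pow; [apply Kl_ge1; lra| exact Hj].
Qed.

Lemma key a b m x y c : inU a b -> partition_interval a b m x y -> 0 < c -> c <= a -> c <= 1 - a ->
  (forall k, (1 <= k)%nat -> (k < m)%nat -> Titer a b k a <> a -> c <= Rabs (Titer a b k a - a)) ->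
  c <= Kl a ^ m * (y - x).
Proof.
  intros HU HP Hc Hca Hca' Hk.
  destruct (inU_facts a b HU) as [Ha [Hb _]].
  pose proof HP as [Hxy [Cx [Cy Hno]]].
  pose proof (cut_range _ _ _ _ Cx). pose proof (cut_range _ _ _ _ Cy).
  assert (HK : 1 <= Kl a ^ m) by (apply pow_R1_Rle; apply Kl_ge1; lra).
  destruct Cx as [Ex|[Ex|[_ [i [Hi Ex]]]]]; [|lra|];
  destruct Cy as [Ey|[Ey|[_ [i' [Hi' Ey]]]]]; try lra.
  - subst. nra.
  -
    subst x. pose proof (lip_m a b m i' 0 y HU ltac:(lia) ltac:(lra)).
    rewrite iter0, Ey in H1 by lra. rewrite Rabs_left1 in H1; lra.
  -
    subst y. pose proof (lip_m a b m i x 1 HU ltac:(lia) ltac:(lra)).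
    rewrite Ex in H1. destruct i.
    + simpl in H1. rewrite Rabs_left1 in H1; lra.
    + rewrite iter1 in H1 by lra. rewrite Rabs_right in H1; lra.
  - destruct (lt_eq_lt_dec i i') as [[Hlt|Heq]|Hgt].
    + pose proof (lip_m a b m i' x y HU ltac:(lia) ltac:(lra)).
      replace i' with ((i' - i) + i)%nat in H1 by lia.
      replace i' with ((i' - i) + i)%nat in Ey by lia.
      rewrite iter_add, Ex in H1. rewrite Ey in H1.
      destruct (Req_dec (Titer a b (i' - i) a) a) as [E|N].
      * exfalso. apply (part_noeq a b m x y i' HU HP Hi').
        replace i' with ((i' - i) + i)%nat by lia. rewrite Ey, iter_add, Ex, E. reflexivity.
      * pose proof (Hk (i' - i)%nat ltac:(lia) ltac:(lia) N). lra.
    + subst i'. exfalso. apply (part_noeq a b m x y i HU HP Hi). congruence.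
    + pose proof (lip_m a b m i x y HU ltac:(lia) ltac:(lra)).
      replace i with ((i - i') + i')%nat in H1 by lia.
      replace i with ((i - i') + i')%nat in Ex by lia.
      rewrite iter_add with (x := y), Ey in H1. rewrite Ex in H1.
      destruct (Req_dec (Titer a b (i - i') a) a) as [E|N].
      * exfalso. apply (part_noeq a b m x y i HU HP Hi).
        replace i with ((i - i') + i')%nat by lia. rewrite Ex, iter_add with (x:=y), Ey, E. reflexivity.
      * pose proof (Hk (i - i')%nat ltac:(lia) ltac:(lia) N). rewrite Rabs_minus_sym in H2. lra.
Qed.

Lemma exists_c a b m : inU a b -> exists c, 0 < c /\ c <= a /\ c <= 1 - a /\
  forall k, (k < m)%nat -> Titer a b k a <> a -> c <= Rabs (Titer a b k a - a).
Proof.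
  intros HU. destruct (inU_facts a b HU) as [Ha _].
  induction m as [|m IH].
  - exists (Rmin a (1-a)). repeat split.
    + apply Rmin_glb_lt; lra.
    + apply Rmin_l.
    + apply Rmin_r.
    + intros; lia.
  - destruct IH as [c [H1 [H2 [H3 H4]]]].
    destruct (Req_dec (Titer a b m a) a) as [E|N].
    + exists c. repeat split; auto. intros k Hk Nk.
      destruct (Nat.eq_dec k m); [subst; contradiction| apply H4; auto; lia].
    + exists (Rmin c (Rabs (Titer a b m a - a))). repeat split.
      * apply Rmin_glb_lt; [lra|]. apply Rabs_pos_lt. lra.
      * pose proof (Rmin_l c (Rabs (Titer a b m a - a))); lra.
      * pose proof (Rmin_l c (Rabs (Titer a b m a - a))); lra.
      * intros k Hk Nk. destruct (Nat.eq_dec k m).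
        -- subst. apply Rmin_r.
        -- eapply Rle_trans; [apply Rmin_l| apply H4; auto; lia].
Qed.

Definition Pbound (a b : R) (m : nat) (d : R) :=
  forall x y, partition_interval a b m x y -> d <= y - x.

Lemma per_param a b m : inU a b -> exists d, 0 < d /\ Pbound a b m d.
Proof.
  intros HU. destruct (inU_facts a b HU) as [Ha _].
  destruct (exists_c a b m HU) as [c [H1 [H2 [H3 H4]]]].
  assert (HK : 0 < Kl a ^ m) by (apply pow_lt; pose proof (Kl_ge1 a Ha); lra).
  exists (c / Kl a ^ m). split; [apply Rdiv_lt_0_compat; lra|].
  intros x y HP. pose proof (key a b m x y c HU HP H1 H2 H3 ltac:(intros; apply H4; auto)).
  apply (Rmult_le_reg_l (Kl a ^ m)); [lra|]. replace (Kl a ^ m * (c / Kl a ^ m)) with c by (field; lra). lra.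
Qed.

Lemma finite_min (P : nat -> R -> Prop) :
  (forall n d d', d' <= d -> P n d -> P n d') ->
  (forall n, exists d, 0 < d /\ P n d) ->
  forall N, exists d, 0 < d /\ forall n, (n < N)%nat -> P n d.
Proof.
  intros Hm Hx N. induction N as [|N IH].
  - exists 1. split; [lra| intros; lia].
  - destruct IH as [d [Hd HP]]. destruct (Hx N) as [d' [Hd' HP']].
    exists (Rmin d d'). split; [apply Rmin_glb_lt; lra|].
    intros n Hn. destruct (Nat.eq_dec n N).
    + subst. apply (Hm N d'); [apply Rmin_r| auto].
    + apply (Hm n d); [apply Rmin_l| apply HP; lia].
Qed.

Lemma param_cont a b a' b' x : 0 < a < 1 -> 0 < a' < 1 -> 0 <= b -> 0 <= b' -> 0 <= x <= 1 ->
  Rabs (skew_tent a b x - skew_tent a' b' x) <= Rabs (b/a - b'/a') + Rabs (b/(1-a) - b'/(1-a')).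
Proof.
  intros. rewrite !tent_min by lra. eapply Rle_trans; [apply Rmin_lip|].
  replace (b/a*x - b'/a'*x) with ((b/a - b'/a')*x) by ring.
  replace (b/(1-a)*(1-x) - b'/(1-a')*(1-x)) with ((b/(1-a) - b'/(1-a'))*(1-x)) by ring.
  rewrite !Rabs_mult, (Rabs_right x), (Rabs_right (1-x)) by lra.
  pose proof (Rabs_pos (b/a - b'/a')). pose proof (Rabs_pos (b/(1-a) - b'/(1-a'))).
  apply Rmax_lub; nra.
Qed.

Lemma cv_comb (u v p q : nat -> R) l l' P Q K : 0 <= K ->
  Un_cv u l -> Un_cv p P -> Un_cv q Q ->
  (forall n, Rabs (v n - l') <= Rabs (p n - P) + Rabs (q n - Q) + K * Rabs (u n - l)) ->
  Un_cv v l'.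
Proof.
  intros HK Hu Hp Hq Hb eps He.
  destruct (Hp (eps/3)) as [N1 H1]; [lra|].
  destruct (Hq (eps/3)) as [N2 H2]; [lra|].
  destruct (Hu (eps/3/(K+1))) as [N3 H3]; [apply Rdiv_lt_0_compat; lra|].
  exists (N1 + N2 + N3)%nat. intros n Hn. unfold R_dist in *.
  specialize (H1 n ltac:(lia)). specialize (H2 n ltac:(lia)). specialize (H3 n ltac:(lia)).
  specialize (Hb n).
  assert (K * Rabs (u n - l) <= eps/3).
  { assert (K * Rabs (u n - l) <= (K+1) * Rabs (u n - l)) by (pose proof (Rabs_pos (u n - l)); nra).
    assert ((K+1) * Rabs (u n - l) <= (K+1) * (eps/3/(K+1))) by (apply Rmult_le_compat_l; lra).
    replace ((K+1) * (eps/3/(K+1))) with (eps/3) in H0 by (field; lra). lra. }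
  lra.
Qed.

Lemma cv_inv (u : nat -> R) l : l <> 0 -> Un_cv u l -> Un_cv (fun n => / u n) (/ l).
Proof.
  intros Hl Hu. apply (continuity_seq (fun x => / x)); auto.
  apply (continuity_pt_inv (fun x => x)); [apply derivable_continuous_pt, derivable_pt_id| auto].
Qed.

Lemma cv_const c : Un_cv (fun _ => c) c.
Proof. intros eps He. exists 0%nat. intros. unfold R_dist. rewrite Rminus_diag, Rabs_R0. lra. Qed.

Lemma finite_N (Q : nat -> nat -> Prop) :
  (forall k, exists N, forall n, (N <= n)%nat -> Q k n) ->
  forall m, exists N, forall k, (k < m)%nat -> forall n, (N <= n)%nat -> Q k n.
Proof.
  intros H m. induction m as [|m IH].
  - exists 0%nat. intros; lia.
  - destruct IH as [N HN]. destruct (H m) as [N' HN'].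
    exists (N + N')%nat. intros k Hk n Hn. destruct (Nat.eq_dec k m).
    + subst. apply HN'; lia.
    + apply HN; lia.
Qed.

Theorem lemma3p2 (a b : nat -> R) :
  (forall n, inU (a n) (b n)) ->
  kneading_in_Minf (a 0%nat) (b 0%nat) ->
  Un_cv (fun n => a (S n)) (a 0%nat) ->
  Un_cv (fun n => b (S n)) (b 0%nat) ->
  forall m : nat, (1 <= m)%nat ->
    exists delta : R, delta > 0 /\
      forall (n : nat) (x y : R),
        partition_interval (a n) (b n) m x y -> delta <= y - x.
Proof.
  intros HU Hkn Ha Hb m Hm.
  set (a0 := a 0%nat) in *. set (b0 := b 0%nat) in *.
  destruct (inU_facts a0 b0 (HU 0%nat)) as [Ha0 [Hb0 _]].
  assert (HUn : forall n, 0 < a n < 1 /\ 0 < b n <= 1) by (intro n; destruct (inU_facts _ _ (HU n)); lra).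
  assert (Hp : Un_cv (fun n => b (S n) / a (S n)) (b0 / a0)).
  { apply CV_mult; auto. apply cv_inv; [lra| auto]. }
  assert (Hq : Un_cv (fun n => b (S n) / (1 - a (S n))) (b0 / (1 - a0))).
  { apply CV_mult; auto. apply cv_inv; [lra|]. apply CV_minus; auto. apply cv_const. }
  assert (Hit : forall k, Un_cv (fun n => Titer (a (S n)) (b (S n)) k (a (S n))) (Titer a0 b0 k a0)).
  { induction k as [|k IH]; [exact Ha|].
    apply (cv_comb _ _ _ _ _ _ _ _ (Kl a0) ltac:(pose proof (Kl_ge1 a0 Ha0); lra) IH Hp Hq).
    intro n. simpl.
    destruct (HUn (S n)) as [HaS HbS].
    pose proof (iter_range (a (S n)) (b (S n)) k (a (S n)) HaS ltac:(lra) ltac:(lra)) as Hr.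
    set (xn := Titer (a (S n)) (b (S n)) k (a (S n))) in *.
    set (x0 := Titer a0 b0 k a0).
    pose proof (param_cont (a (S n)) (b (S n)) a0 b0 xn HaS Ha0 ltac:(lra) ltac:(lra) Hr).
    pose proof (tent_lip a0 b0 xn x0 Ha0 ltac:(lra)).
    pose proof (Rabs_triang (skew_tent (a (S n)) (b (S n)) xn - skew_tent a0 b0 xn)
                             (skew_tent a0 b0 xn - skew_tent a0 b0 x0)).
    replace (skew_tent (a (S n)) (b (S n)) xn - skew_tent a0 b0 xn + (skew_tent a0 b0 xn - skew_tent a0 b0 x0))
      with (skew_tent (a (S n)) (b (S n)) xn - skew_tent a0 b0 x0) in H1 by ring.
    lra. }
  destruct (exists_c a0 b0 m (HU 0%nat)) as [c0 [Hc0 [Hc1 [Hc2 Hc3]]]].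
  set (eps := Rmin (c0/4) (Rmin (a0/2) ((1-a0)/2))).
  assert (Heps : 0 < eps) by (unfold eps; repeat apply Rmin_glb_lt; lra).
  assert (He1 : eps <= c0/4) by apply Rmin_l.
  assert (He2 : eps <= a0/2) by (eapply Rle_trans; [apply Rmin_r| apply Rmin_l]).
  assert (He3 : eps <= (1-a0)/2) by (eapply Rle_trans; [apply Rmin_r| apply Rmin_r]).
  destruct (Ha eps Heps) as [N0 HN0].
  destruct (finite_N (fun k n => R_dist (Titer (a (S n)) (b (S n)) k (a (S n))) (Titer a0 b0 k a0) < c0/4)
              (fun k => Hit k (c0/4) ltac:(lra)) m) as [N1 HN1].
  set (Kb := 2/a0 + 2/(1-a0)).
  assert (HKb : 0 < Kb ^ m).
  { apply pow_lt. unfold Kb. assert (0 < 2/a0) by (apply Rdiv_lt_0_compat; lra).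
    assert (0 < 2/(1-a0)) by (apply Rdiv_lt_0_compat; lra). lra. }
  assert (Hlarge : forall n, (N0 + N1 <= n)%nat -> Pbound (a (S n)) (b (S n)) m (c0/2 / Kb ^ m)).
  { intros n Hn x y HP.
    specialize (HN0 n ltac:(lia)). unfold R_dist in HN0.
    destruct (HUn (S n)) as [HaS HbS].
    assert (Hclose : Rabs (a (S n) - a0) < eps) by exact HN0.
    apply Rabs_def2 in Hclose.
    assert (Hkey : c0/2 <= Kl (a (S n)) ^ m * (y - x)).
    { apply key with (b := b (S n)); auto; try lra.
      intros k Hk1 Hk2 _.
      specialize (HN1 k Hk2 n ltac:(lia)). unfold R_dist in HN1.
      assert (Tk : Titer a0 b0 k a0 <> a0) by (apply Hkn; auto).
      specialize (Hc3 k Hk2 Tk).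
      pose proof (Rabs_triang (Titer (a (S n)) (b (S n)) k (a (S n)) - Titer a0 b0 k a0)
                               (Titer a0 b0 k a0 - a (S n))).
      replace (Titer (a (S n)) (b (S n)) k (a (S n)) - Titer a0 b0 k a0 + (Titer a0 b0 k a0 - a (S n)))
        with (Titer (a (S n)) (b (S n)) k (a (S n)) - a (S n)) in H by ring.
      pose proof (Rabs_triang (Titer a0 b0 k a0 - a (S n)) (a (S n) - a0)).
      replace (Titer a0 b0 k a0 - a (S n) + (a (S n) - a0)) with (Titer a0 b0 k a0 - a0) in H0 by ring.
      pose proof (Rabs_triang (Titer a0 b0 k a0 - Titer (a (S n)) (b (S n)) k (a (S n)))
                              (Titer (a (S n)) (b (S n)) k (a (S n)) - a (S n))).
      replace (Titer a0 b0 k a0 - Titer (a (S n)) (b (S n)) k (a (S n)) + (Titer (a (S n)) (b (S n)) k (a (S n)) - a (S n)))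
        with (Titer a0 b0 k a0 - a (S n)) in H1 by ring.
      rewrite (Rabs_minus_sym (Titer a0 b0 k a0) (Titer (a (S n)) (b (S n)) k (a (S n)))) in H1.
      assert (Rabs (a (S n) - a0) < eps) by (apply Rabs_def1; lra).
      lra. }
    assert (HKl : Kl (a (S n)) <= Kb).
    { unfold Kl, Kb. unfold Rdiv. rewrite !Rmult_1_l.
      assert (/ a (S n) <= / (a0/2)) by (apply Rinv_le_contravar; lra).
      assert (/ (1 - a (S n)) <= / ((1-a0)/2)) by (apply Rinv_le_contravar; lra).
      replace (/ (a0/2)) with (2 * / a0) in H by (field; lra).
      replace (/ ((1-a0)/2)) with (2 * / (1-a0)) in H0 by (field; lra). lra. }
    assert (HKm : Kl (a (S n)) ^ m <= Kb ^ m).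
    { apply pow_incr. split; [pose proof (Kl_ge1 _ HaS); lra| exact HKl]. }
    destruct HP as [Hxy _].
    assert (c0/2 <= Kb ^ m * (y - x)) by nra.
    apply (Rmult_le_reg_l (Kb ^ m)); [lra|].
    replace (Kb ^ m * (c0 / 2 / Kb ^ m)) with (c0/2) by (field; lra). lra. }
  destruct (finite_min (fun n d => Pbound (a n) (b n) m d)
              ltac:(intros n d d' Hd HP x y Hxy; specialize (HP x y Hxy); lra)
              (fun n => per_param (a n) (b n) m (HU n)) (S (N0 + N1))) as [d [Hd Hfin]].
  exists (Rmin d (c0/2 / Kb ^ m)). split.
  { apply Rmin_glb_lt; [lra| apply Rdiv_lt_0_compat; lra]. }
  intros n x y HP.
  destruct (le_lt_dec (S (N0 + N1)) n) as [Hn|Hn].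
  - destruct n as [|n]; [lia|].
    pose proof (Hlarge n ltac:(lia) x y HP). pose proof (Rmin_r d (c0/2 / Kb ^ m)). lra.
  - pose proof (Hfin n Hn x y HP). pose proof (Rmin_l d (c0/2 / Kb ^ m)). lra.
Qed.
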